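(* Let $\mathfrak{g}$ be the affine Lie algebra of type $D^{(1)}_4$ with the $\mathbb{Z}$-gradation of type $s=(1,1,0,1,1)$, grading element $d_s$, normalized invariant form $(\,|\,)$ and Heisenberg elements $\Lambda_{k,i}$ as described in the context. Let $W=W(t_{1,1},t_{1,2},t_{3,1},t_{3,2},\ldots)$ be a $G_{<0}$-valued (formal) function satisfying the Sato equations \[ \partial_{k,i}(W)=B_{k,i}W-W\Lambda_{k,i}\qquad (i=1,2;\ k=1,3,5,\ldots), \] understood as $\partial_{k,i}-B_{k,i}=W(\partial_{k,i}-\Lambda_{k,i})W^{-1}$, where $\partial_{k,i}=\partial/\partial t_{k,i}$ and $B_{k,i}$ is the $\mathfrak{g}_{\geq0}$-component of $W\Lambda_{k,i}W^{-1}\in\widehat{\mathfrak{g}}_{<0}\oplus\mathfrak{g}_{\geq0}$. Write $B_{1,i}=\Lambda_{1,i}+U_i$ $(i=1,2)$, where $U_i$ is $\mathfrak{g}_0(s)$-valued. Then \[ (d_s\,|\,\partial_{1,i}(U_j))+\tfrac{1}{2}(U_i\,|\,U_j)=0\qquad (i,j=1,2). \]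
   Context: $\mathfrak{g}=\mathfrak{g}(D^{(1)}_4)$ is the Lie algebra generated by $e_i,f_i,\alpha_i^\vee$ $(i=0,\ldots,4)$ and $d$ with relations $(\mathrm{ad}\,e_i)^{1-a_{ij}}(e_j)=0$, $(\mathrm{ad}\,f_i)^{1-a_{ij}}(f_j)=0$ $(i\neq j)$, $[\alpha_i^\vee,\alpha_j^\vee]=0$, $[\alpha_i^\vee,e_j]=a_{ij}e_j$, $[\alpha_i^\vee,f_j]=-a_{ij}f_j$, $[e_i,f_j]=\delta_{ij}\alpha_i^\vee$, $[d,\alpha_i^\vee]=0$, $[d,e_i]=\delta_{i0}e_0$, $[d,f_i]=-\delta_{i0}f_0$, where $A=(a_{ij})$ is the Cartan matrix with $a_{ii}=2$, $a_{2j}=a_{j2}=-1$ for $j=0,1,3,4$, and all other entries $0$. $\mathfrak{h}=\bigoplus_j\mathbb{C}\alpha_j^\vee\oplus\mathbb{C}d$; $K=\alpha_0^\vee+\alpha_1^\vee+2\alpha_2^\vee+\alpha_3^\vee+\alpha_4^\vee$. The invariant form is determined by $(\alpha_i^\vee|\alpha_j^\vee)=a_{ij}$, $(e_i|f_j)=\delta_{ij}$, $(\alpha_i^\vee|e_j)=(\alpha_i^\vee|f_j)=0$, $(d|d)=0$, $(d|\alpha_j^\vee)=\delta_{0j}$, $(d|e_j)=(d|f_j)=0$. The gradation of type $s=(1,1,0,1,1)$: $\deg\mathfrak{h}=\deg e_2=\deg f_2=0$, $\deg e_i=1$, $\deg f_i=-1$ for $i=0,1,3,4$; equivalently $\mathfrak{g}_k(s)=\{x:[d_s,x]=kx\}$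 with $d_s=4d+2\alpha_1^\vee+3\alpha_2^\vee+2\alpha_3^\vee+2\alpha_4^\vee$. $\mathfrak{g}_{<0}=\bigoplus_{k<0}\mathfrak{g}_k(s)$, $\mathfrak{g}_{\ge0}=\bigoplus_{k\ge0}\mathfrak{g}_k(s)$; $\widehat{\mathfrak{g}}_{<0}$ is the completion of $\mathfrak{g}_{<0}$ and $G_{<0}=\exp(\widehat{\mathfrak{g}}_{<0})$. Write $e_{2j}=[e_2,e_j]$. $\Lambda_{1,1}=-e_0+e_1+e_3-e_{21}+e_{23}+e_{24}$, $\Lambda_{1,2}=e_1-e_3+e_4+e_{20}+e_{21}+e_{23}$. The Heisenberg subalgebra is $\mathfrak{s}=\{x\in\mathfrak{g}:[\Lambda_{1,1},x]\in\mathbb{C}K\}=\bigoplus_k\mathfrak{s}_k(s)$, with $\mathfrak{s}_{2k-1}(s)=\mathbb{C}\Lambda_{2k-1,1}\oplus\mathbb{C}\Lambda_{2k-1,2}$ for chosen elements satisfying $[\Lambda_{2k-1,i},\Lambda_{2l-1,j}]=(2k-1)\delta_{ij}\delta_{k+l,1}K$. *)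

(* Defs.v *)
(* Concrete model of the affine Lie algebra g(D_4^(1)) as the
   centrally extended loop algebra  so(8) (x) C[z,z^-1] + C K + C d,
   with coefficients in an arbitrary commutative ring R (later: C = R0[i], or
   the differential algebra S of "formal functions"). *)
From HB Require Import structures.
From mathcomp Require Import all_boot all_order all_algebra.
From mathcomp Require Import reals complex.
Set Implicit Arguments.
Unset Strict Implicit.
Unset Printing Implicit Defensive.
Import Order.TTheory GRing.Theory Num.Theory.
Local Open Scope ring_scope.

(* An element  sum_p (lp p) z^p + kc K + dc d  (possibly infinitely many p's:
   this also models the completion \hat g_{<0}). *)
Record elt (R : Type) := Elt { lp : int -> 'M[R]_8 ; kc : R ; dc : R }.

Definition zsum (V : nmodType) (lo hi : int) (F : int -> V) : V :=
  \sum_(i < absz (hi - lo + 1) | lo + i%:Z <= hi) F (lo + i%:Z).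

(* weights of the diagonal grading element h_s = 2a1^v+3a2^v+2a3^v+2a4^v
   on the standard basis e1,e2,e3,e4,e_-4,e_-3,e_-2,e_-1 of C^8 *)
Definition lam (a : 'I_8) : int := nth 0 [:: 2%:Z; 1; 1; 0; 0; -1; -1; -2] a.

(* d_s-degree of the matrix unit E_ab z^p *)
Definition sdeg (p : int) (a b : 'I_8) : int := 4 * p + lam a - lam b.

Section Generic.
Variable R : comUnitRingType.

Definition halfR : R := (2%:R)^-1.

Definition Jmx : 'M[R]_8 := \matrix_(a, b) ((a : nat) + b == 7)%:R.
Definition so8 (x : 'M[R]_8) : Prop := x^T *m Jmx + Jmx *m x = 0.

Definition nform (x y : 'M[R]_8) : R := halfR * \tr (x *m y).
Definition mcom (x y : 'M[R]_8) : 'M[R]_8 := x *m y - y *m x.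

Definition ezero : elt R := Elt (fun _ => 0) 0 0.
Definition eadd (X Y : elt R) : elt R :=
  Elt (fun p => lp X p + lp Y p) (kc X + kc Y) (dc X + dc Y).
Definition eopp (X : elt R) : elt R := Elt (fun p => - lp X p) (- kc X) (- dc X).
Definition escale (c : R) (X : elt R) : elt R :=
  Elt (fun p => c *: lp X p) (c * kc X) (c * dc X).
Definition eK : elt R := Elt (fun _ => 0) 1 0.
Definition ed : elt R := Elt (fun _ => 0) 0 1.
Definition loop_at (p0 : int) (x : 'M[R]_8) : elt R :=
  Elt (fun p => if p == p0 then x else 0) 0 0.

(* Lie bracket [X, Y], valid when the loop part of X is supported in [-N, N]:
   [x z^m, y z^n] = [x,y] z^(m+n) + m delta_{m+n,0} (x|y) K,
   [d, y z^n] = n y z^n,  K central. *)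
Definition ebr (N : int) (X Y : elt R) : elt R :=
  Elt (fun p => zsum (- N) N (fun m => mcom (lp X m) (lp Y (p - m)))
                + (dc X * p%:~R) *: lp Y p - (dc Y * p%:~R) *: lp X p)
      (zsum (- N) N (fun m => m%:~R * nform (lp X m) (lp Y (- m))))
      0.

(* invariant form (X|Y), valid when the loop part of X is supported in [-N,N];
   (K|d) = 1, (K|K) = (d|d) = 0, loop part orthogonal to K and d *)
Definition eform (N : int) (X Y : elt R) : R :=
  zsum (- N) N (fun m => nform (lp X m) (lp Y (- m)))
  + kc X * dc Y + dc X * kc Y.

(* ad w, for w in \hat g_{<0} (loop part supported in p <= 0, no K, d parts)
   applied to X whose loop part is supported in p <= D *)
Definition adw (w : int -> 'M[R]_8) (D : int) (X : elt R) : elt R :=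
  Elt (fun p => zsum (p - D) 0 (fun m => mcom (w m) (lp X (p - m)))
                - (dc X * p%:~R) *: w p)
      (zsum (- D) 0 (fun m => m%:~R * nform (w m) (lp X (- m))))
      0.

(* Since w has d_s-degree <= -1 and X has loop
   support <= D (hence d_s-degree <= 4D+4), the truncations below are exact:
   the z^p-component of (ad w)^k X vanishes for k > 4(D-p)+8. *)
Definition expser (c : nat -> R) (w : int -> 'M[R]_8) (D : int) (X : elt R) :=
  Elt (fun p => \sum_(k < absz (4 * (D - p) + 9))
                  c k *: lp (iter k (adw w D) X) p)
      (\sum_(k < absz (4 * D + 9)) c k * kc (iter k (adw w D) X))
      (\sum_(k < absz (4 * D + 9)) c k * dc (iter k (adw w D) X)).

(* W X W^{-1} = exp(ad w) X  for W = exp w *)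
Definition AdW (w : int -> 'M[R]_8) (D : int) (X : elt R) : elt R :=
  expser (fun k => (k`!%:R)^-1) w D X.

(* (dW) W^{-1} = sum_k (ad w)^k (dw) / (k+1)!  for W = exp w *)
Definition dlogW (w dw : int -> 'M[R]_8) : elt R :=
  expser (fun k => (k.+1`!%:R)^-1) w 0 (Elt dw 0 0).

Definition posproj (X : elt R) : elt R :=
  Elt (fun p => \matrix_(a, b) (if 0 <= sdeg p a b then lp X p a b else 0))
      (kc X) (dc X).

Definition in_gneg (w : int -> 'M[R]_8) : Prop :=
  (forall p, so8 (w p)) /\
  (forall p (a b : 'I_8), 0 <= sdeg p a b -> w p a b = 0).

Definition Emx (i j : nat) : 'M[R]_8 := delta_mx (inord i) (inord j).
Definition Eminus (i j : nat) : 'M[R]_8 := Emx i j - Emx (7 - j) (7 - i). (* e_i - e_j *)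
Definition Eplus (i j : nat) : 'M[R]_8 := Emx i (7 - j) - Emx j (7 - i).  (* e_i + e_j *)
Definition Enegp (i j : nat) : 'M[R]_8 := Emx (7 - j) i - Emx (7 - i) j.  (* -e_i - e_j *)

Definition gen_e (i : nat) : elt R :=
  match i with
  | 0 => loop_at 1 (Enegp 0 1)          (* e_0 = E_{-theta} z *)
  | 1 => loop_at 0 (Eminus 0 1)
  | 2 => loop_at 0 (Eminus 1 2)
  | 3 => loop_at 0 (Eminus 2 3)
  | _ => loop_at 0 (Eplus 2 3)
  end.
Definition gen_f (i : nat) : elt R :=
  match i with
  | 0 => loop_at (-1) (Enegp 0 1)^T     (* f_0 = E_theta z^-1 *)
  | 1 => loop_at 0 (Eminus 0 1)^T
  | 2 => loop_at 0 (Eminus 1 2)^T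
  | 3 => loop_at 0 (Eminus 2 3)^T
  | _ => loop_at 0 (Eplus 2 3)^T
  end.
Definition coroot (i : nat) : elt R := ebr 1 (gen_e i) (gen_f i).

Definition d_s : elt R :=
  eadd (escale 4%:R ed)
   (eadd (escale 2%:R (coroot 1))
    (eadd (escale 3%:R (coroot 2))
     (eadd (escale 2%:R (coroot 3)) (escale 2%:R (coroot 4))))).

Definition e2 (j : nat) : elt R := ebr 1 (gen_e 2) (gen_e j).
Definition lcomb (s : seq (R * elt R)) : elt R :=
  foldr (fun ct acc => eadd (escale ct.1 ct.2) acc) ezero s.

Definition Lam11 : elt R :=
  lcomb [:: (-1, gen_e 0); (1, gen_e 1); (1, gen_e 3); (-1, e2 1); (1, e2 3); (1, e2 4)].
Definition Lam12 : elt R :=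
  lcomb [:: (1, gen_e 1); (-1, gen_e 3); (1, gen_e 4); (1, e2 0); (1, e2 1); (1, e2 3)].

End Generic.

Definition emap (R R' : Type) (f : R -> R') (X : elt R) : elt R' :=
  Elt (fun p => map_mx f (lp X p)) (f (kc X)) (f (dc X)).

Definition is_derivation (C : fieldType) (S : comUnitAlgType C) (D : S -> S) : Prop :=
  (forall x y, D (x + y) = D x + D y) /\
  (forall (c : C) x, D (c *: x) = c *: D x) /\
  (forall x y, D (x * y) = D x * y + x * D y).

(* Main.v *)
Require Import Defs.
From HB Require Import structures.
From mathcomp Require Import all_boot all_order all_algebra.
From mathcomp Require Import reals complex.
From mathcomp Require Import zify ring lra.
Set Implicit Arguments. Unset Strict Implicit. Unset Printing Implicit Defensive.
Import Order.TTheory GRing.Theory Num.Theory.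
Local Open Scope ring_scope.

Lemma sdeg_split m q (a c b : 'I_8) : sdeg (m + q) a b = sdeg m a c + sdeg q c b.
Proof. rewrite /sdeg; lia. Qed.

Lemma lam_bd (a : 'I_8) : -2 <= lam a <= 2.
Proof. case: a => [[|[|[|[|[|[|[|[|]]]]]]]] //]. Qed.

Lemma zsum_cons lo hi (V : nmodType) (F : int -> V) : lo <= hi -> zsum lo hi F = F lo + zsum (lo + 1) hi F.
Proof.
move=> h; rewrite /zsum.
have -> : absz (hi - lo + 1) = (absz (hi - (lo + 1) + 1)).+1 by lia.
rewrite big_mkcond big_ord_recl /= addr0 h [in RHS]big_mkcond; congr (_ + _).
apply: eq_bigr => k _; rewrite /bump /=.
have -> : lo + (1 + k)%N%:Z = lo + 1 + k%:Z by lia.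
by [].
Qed.

Lemma zsum_nil lo hi (V : nmodType) (F : int -> V) : hi < lo -> zsum lo hi F = 0.
Proof. by move=> h; rewrite /zsum big1 // => k; lia. Qed.


Section Gen.
Variable R : comUnitRingType.

Definition degle (t : int) (f : int -> 'M[R]_8) :=
  forall p a b, t <= sdeg p a b -> f p a b = 0.

Lemma mcomE (x y : 'M[R]_8) a b :
  mcom x y a b = \sum_c x a c * y c b - \sum_c y a c * x c b.
Proof. by rewrite /mcom !mxE. Qed.

Lemma zsum_mxE lo hi (F : int -> 'M[R]_8) a b :
  zsum lo hi F a b = zsum lo hi (fun m => F m a b).
Proof. by rewrite /zsum summxE. Qed.

Lemma zsum0 lo hi (F : int -> R) : (forall m, F m = 0) -> zsum lo hi F = 0.
Proof. by move=> h; rewrite /zsum big1. Qed.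

Lemma adw_deg (w : int -> 'M[R]_8) D (Y : elt R) t : degle 0 w -> dc Y = 0 -> degle t (lp Y) ->
  degle (t - 1) (lp (adw w D Y)).
Proof.
move=> hw hdc hY p a b hp /=; rewrite hdc mul0r scale0r subr0 zsum_mxE.
apply: zsum0 => m.
have h1 c : w m a c * lp Y (p - m) c b = 0.
  have [hm|hm] := ltP (sdeg m a c) 0; last by rewrite hw ?mul0r.
  rewrite hY ?mulr0 //. have := sdeg_split m (p - m) a c b. rewrite (addrC m) subrK; lia.
have h2 c : lp Y (p - m) a c * w m c b = 0.
  have [hm|hm] := ltP (sdeg m c b) 0; last by rewrite hw ?mulr0.
  rewrite hY ?mul0r //. have := sdeg_split (p - m) m a c b. rewrite subrK; lia.
by rewrite mcomE !big1 ?subr0.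
Qed.

Lemma iter_dc (w : int -> 'M[R]_8) D (X : elt R) k : dc X = 0 -> dc (iter k (adw w D) X) = 0.
Proof. by case: k. Qed.

Lemma degle_mono t t' f : t <= t' -> degle t f -> degle t' f.
Proof. move=> htt h p a b hp; apply: h; lia. Qed.

Lemma iter_deg (w : int -> 'M[R]_8) D (X : elt R) t k : degle 0 w -> dc X = 0 -> degle t (lp X) ->
  degle (t - k%:Z) (lp (iter k (adw w D) X)).
Proof.
move=> hw hdc hX; elim: k => [|k IH] /=; first by rewrite subr0.
have -> : t - k.+1%:Z = t - k%:Z - 1 by lia.
by apply: adw_deg => //; apply: iter_dc.
Qed.

Lemma trE (x y : 'M[R]_8) : \tr (x *m y) = \sum_a \sum_c x a c * y c a.
Proof. by rewrite /mxtrace; apply: eq_bigr => a _; rewrite mxE. Qed.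

Lemma adw_kc0 (w : int -> 'M[R]_8) D (Y : elt R) : degle 0 w -> degle 1 (lp Y) -> kc (adw w D Y) = 0.
Proof.
move=> hw hY /=; apply: zsum0 => m.
rewrite /nform trE (eq_bigr (fun _ => 0)) ?big1 ?mulr0 // => a _.
apply: big1 => c _.
have [hm|hm] := ltP (sdeg m a c) 0; last by rewrite hw ?mul0r.
rewrite hY ?mulr0 //. have := sdeg_split m (- m) a c a. rewrite subrr (_ : sdeg 0 a a = 0); [lia|rewrite /sdeg; lia].
Qed.

Lemma sum_trunc (F : nat -> R) N K : (K <= N)%N -> (forall k, (K <= k)%N -> F k = 0) ->
  \sum_(k < N) F k = \sum_(k < K) F k.
Proof.
move=> hKN hF; rewrite (big_ord_widen N F hKN) [RHS]big_mkcond /=.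
by apply: eq_bigr => k _; case: ifP => // /negbT; rewrite -leqNgt => /hF ->.
Qed.

Lemma expser_lpE c (w : int -> 'M[R]_8) D (X : elt R) p a b :
  lp (expser c w D X) p a b =
  \sum_(k < absz (4 * (D - p) + 9)) c k * lp (iter k (adw w D) X) p a b.
Proof. by rewrite /= summxE; apply: eq_bigr => k _; rewrite mxE. Qed.

Lemma trB (x y : 'M[R]_8) : \tr (x - y) = \tr x - \tr y.
Proof. exact: raddfB. Qed.

Lemma trD (x y : 'M[R]_8) : \tr (x + y) = \tr x + \tr y.
Proof. exact: mxtraceD. Qed.

Lemma tr_com_l (w x y : 'M[R]_8) : \tr (mcom w x *m y) = \tr (w *m mcom x y).
Proof.
rewrite /mcom mulmxBl mulmxBr !trB -!mulmxA; congr (_ - _).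
by rewrite mxtrace_mulC mulmxA.
Qed.

Lemma tr_com_r (w x y : 'M[R]_8) : \tr (mcom w x *m y) = - \tr (x *m mcom w y).
Proof.
rewrite /mcom mulmxBl mulmxBr !trB opprB -!mulmxA.
by rewrite [\tr (w *m _)]mxtrace_mulC -mulmxA.
Qed.

Lemma core3_gen (c : 'M[R]_8 -> 'M[R]_8 -> 'M[R]_8)
  (hc : forall w x y, \tr (c w x *m y) = \tr (w *m c x y))
  (w2 w1 w0 A0 A1 B0 B1 : 'M[R]_8) :
  c A0 B0 = 0 -> c A0 B1 + c A1 B0 = 0 -> c A1 B1 = 0 ->
  \tr ((c w2 A1 + c w1 A0) *m B1) + \tr ((c w1 A1 + c w0 A0) *m B0) = 0.
Proof.
move=> h00 h01 h11.
rewrite !mulmxDl !trD !hc h00 h11 !mulmx0 !mxtrace0 add0r addr0.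
by rewrite addrC -trD -mulmxDr addrC h01 mulmx0 mxtrace0.
Qed.

Definition core3 := core3_gen tr_com_l.

Lemma core4_gen (c : 'M[R]_8 -> 'M[R]_8 -> 'M[R]_8)
  (hc : forall w x y, \tr (c w x *m y) = - \tr (x *m c w y))
  (w2 w1 w0 A0 A1 B0 B1 : 'M[R]_8) :
  let Xm := c w2 A1 + c w1 A0 in
  let X0 := c w1 A1 + c w0 A0 in
  let X1 := c w0 A1 in
  let Ym := c w2 B1 + c w1 B0 in
  let Y0 := c w1 B1 + c w0 B0 in
  let Y1 := c w0 B1 in
  \tr ((c w2 X1 + c w1 X0 + c w0 Xm) *m B1) + \tr ((c w1 X1 + c w0 X0) *m B0)
  = - (\tr (X1 *m Ym) + \tr (X0 *m Y0) + \tr (Xm *m Y1)).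
Proof.
move=> Xm X0 X1 Ym Y0 Y1; rewrite /Ym /Y0 /Y1; clearbody Xm X0 X1.
rewrite !mulmxDl !trD !hc !mulmxDr !trD.
ring.
Qed.

Definition core4 := core4_gen tr_com_r.

Definition dg (l : 'I_8 -> int) : 'M[R]_8 := diag_mx (\row_a ((l a)%:~R)).

Lemma dgE l a b : dg l a b = (a == b)%:R * (l a)%:~R.
Proof. by rewrite /dg !mxE mulr_natl. Qed.

Lemma tr_filter (M M' N : 'M[R]_8) : (forall a c, N c a != 0 -> M a c = M' a c) ->
  \tr (M *m N) = \tr (M' *m N).
Proof.
move=> h; rewrite !trE; apply: eq_bigr => a _; apply: eq_bigr => c _.
by have [->|/h ->] := eqVneq (N c a) 0; rewrite ?mulr0.
Qed.

Lemma tr_filter_r (M N N' : 'M[R]_8) : (forall a c, M a c != 0 -> N c a = N' c a) ->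
  \tr (M *m N) = \tr (M *m N').
Proof.
move=> h; rewrite !trE; apply: eq_bigr => a _; apply: eq_bigr => c _.
by have [->|/h ->] := eqVneq (M a c) 0; rewrite ?mul0r.
Qed.

Lemma mcom_dgE n (M : 'M[R]_8) a c :
  (mcom (dg lam) M + (4 * n)%:~R *: M) a c = (sdeg n a c)%:~R * M a c.
Proof.
rewrite /mcom /dg mul_diag_mx mul_mx_diag !mxE /sdeg.
rewrite !intrD ?intrB ?intrM. ring.
Qed.

Lemma sdeg_tr n (M N : 'M[R]_8) : (forall a c, N c a != 0 -> sdeg n a c = -1) ->
  \tr ((mcom (dg lam) M + (4 * n)%:~R *: M) *m N) = - \tr (M *m N).
Proof.
move=> h; rewrite (_ : - \tr (M *m N) = \tr (- M *m N)); last by rewrite mulNmx linearN.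
apply: tr_filter => a c /h hs.
by rewrite mcom_dgE hs !mxE mulN1r.
Qed.

Lemma trUU m (Mi Mj Ui Uj : 'M[R]_8) :
  (forall a c, Ui a c = if sdeg m a c == 0 then Mi a c else 0) ->
  (forall a c, Uj a c = if sdeg (- m) a c == 0 then Mj a c else 0) ->
  (forall a c, 1 <= sdeg m a c -> Mi a c = 0) ->
  (forall a c, 1 <= sdeg (- m) a c -> Mj a c = 0) ->
  \tr (Ui *m Uj) = \tr (Mi *m Mj).
Proof.
move=> hi hj hMi hMj; rewrite !trE; apply: eq_bigr => a _; apply: eq_bigr => c _.
rewrite hi hj.
have e : sdeg (- m) c a = - sdeg m a c by rewrite /sdeg; lia.
have [h0|h0] := eqVneq (sdeg m a c) 0.
  by rewrite e h0 oppr0 eqxx.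
rewrite e oppr_eq0 (negbTE h0) mul0r.
have [hp|hn] := ltP 0 (sdeg m a c).
  by rewrite hMi ?mul0r.
rewrite hMj ?mulr0 // e; lia.
Qed.
End Gen.
Section D.
Variable R : comUnitRingType.
Lemma ds_dc : dc (@d_s R) = 4%:R.
Proof. rewrite /= !mulr0 !addr0 mulr1 //. Qed.

Lemma mcom00 : mcom (0 : 'M[R]_8) 0 = 0.
Proof. by rewrite /mcom mulmx0 subrr. Qed.

Lemma coroot0 k : (0 < k < 5)%N -> lp (@coroot R k) 0 =
  mcom (lp (gen_e R k) 0) (lp (gen_f R k) 0).
Proof.
case: k => [|[|[|[|[|]]]]] // _; rewrite /coroot /ebr /= !mul0r !scale0r !subr0 !addr0;
  rewrite (zsum_cons _ (lo := -1)) // (zsum_cons _ (lo := -1 + 1)) // (zsum_cons _ (lo := -1 + 1 + 1)) // zsum_nil //=.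
  all: rewrite ?mcom00 ?add0r ?addr0 //.
Qed.

Lemma inord_eq8 (u x : nat) : (u < 8)%N -> (x < 8)%N -> ((inord u : 'I_8) == inord x) = (u == x).
Proof. by move=> hu hx; rewrite -val_eqE /= !inordK. Qed.

Lemma ord8 (a : 'I_8) : exists2 u, (u < 8)%N & a = inord u.
Proof. by exists (val a); [exact: ltn_ord | rewrite inord_val]. Qed.

Lemma lp_eadd (X Y : elt R) p : lp (eadd X Y) p = lp X p + lp Y p.
Proof. by []. Qed.
Lemma lp_escale c (X : elt R) p : lp (escale c X) p = c *: lp X p.
Proof. by []. Qed.

Lemma comm1 : mcom (Eminus R 0 1) (Eminus R 0 1)^T =
   dg R (fun a => nth 0 [:: 1; -1; 0; 0; 0; 0; 1; -1] a).
Proof.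
rewrite /mcom /Eminus /Eplus /Emx /=;
  rewrite !linearB /= !trmx_delta;
  rewrite !mulmxBl !mul_delta_mx_cond !inord_eq8 //=;
  apply/matrixP => a b; rewrite dgE !mxE;
  have [u hu ->] := ord8 a; have [x hx ->] := ord8 b;
  rewrite !inord_eq8 //;
  move: hu hx; case: u => [|[|[|[|[|[|[|[|]]]]]]]] //= _; case: x => [|[|[|[|[|[|[|[|]]]]]]]] //= _;
  rewrite ?inordK //=; ring.
Qed.
Lemma comm2 : mcom (Eminus R 1 2) (Eminus R 1 2)^T =
   dg R (fun a => nth 0 [:: 0; 1; -1; 0; 0; 1; -1; 0] a).
Proof.
rewrite /mcom /Eminus /Eplus /Emx /=;
  rewrite !linearB /= !trmx_delta;
  rewrite !mulmxBl !mul_delta_mx_cond !inord_eq8 //=;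
  apply/matrixP => a b; rewrite dgE !mxE;
  have [u hu ->] := ord8 a; have [x hx ->] := ord8 b;
  rewrite !inord_eq8 //;
  move: hu hx; case: u => [|[|[|[|[|[|[|[|]]]]]]]] //= _; case: x => [|[|[|[|[|[|[|[|]]]]]]]] //= _;
  rewrite ?inordK //=; ring.
Qed.
Lemma comm3 : mcom (Eminus R 2 3) (Eminus R 2 3)^T =
   dg R (fun a => nth 0 [:: 0; 0; 1; -1; 1; -1; 0; 0] a).
Proof.
rewrite /mcom /Eminus /Eplus /Emx /=;
  rewrite !linearB /= !trmx_delta;
  rewrite !mulmxBl !mul_delta_mx_cond !inord_eq8 //=;
  apply/matrixP => a b; rewrite dgE !mxE;
  have [u hu ->] := ord8 a; have [x hx ->] := ord8 b;
  rewrite !inord_eq8 //;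
  move: hu hx; case: u => [|[|[|[|[|[|[|[|]]]]]]]] //= _; case: x => [|[|[|[|[|[|[|[|]]]]]]]] //= _;
  rewrite ?inordK //=; ring.
Qed.
Lemma comm4 : mcom (Eplus R 2 3) (Eplus R 2 3)^T =
   dg R (fun a => nth 0 [:: 0; 0; 1; 1; -1; -1; 0; 0] a).
Proof.
rewrite /mcom /Eminus /Eplus /Emx /=;
  rewrite !linearB /= !trmx_delta;
  rewrite !mulmxBl !mul_delta_mx_cond !inord_eq8 //=;
  apply/matrixP => a b; rewrite dgE !mxE;
  have [u hu ->] := ord8 a; have [x hx ->] := ord8 b;
  rewrite !inord_eq8 //;
  move: hu hx; case: u => [|[|[|[|[|[|[|[|]]]]]]]] //= _; case: x => [|[|[|[|[|[|[|[|]]]]]]]] //= _;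
  rewrite ?inordK //=; ring.
Qed.

Lemma ds_loop0 : lp (@d_s R) 0 = dg R lam.
Proof.
rewrite /d_s !lp_eadd !lp_escale !coroot0 // [lp (ed R) 0]/= scaler0 add0r.
rewrite [lp (gen_e R 1) 0]/= [lp (gen_f R 1) 0]/= [lp (gen_e R 2) 0]/= [lp (gen_f R 2) 0]/=.
rewrite [lp (gen_e R 3) 0]/= [lp (gen_f R 3) 0]/= [lp (gen_e R 4) 0]/= [lp (gen_f R 4) 0]/=.
rewrite comm1 comm2 comm3 comm4.
apply/matrixP => a b; rewrite !mxE.
have [u hu ->] := ord8 a; have [x hx ->] := ord8 b.
rewrite !inord_eq8 //.
move: hu hx; case: u => [|[|[|[|[|[|[|[|]]]]]]]] //= _; case: x => [|[|[|[|[|[|[|[|]]]]]]]] //= _;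
  rewrite /lam ?inordK //=; ring.
Qed.
End D.
Section Model.
Variable R : comUnitRingType.
Variable w : int -> 'M[R]_8.
Hypothesis hw : degle 0 w.
Variable L : elt R.
Hypothesis hLk : kc L = 0.
Hypothesis hLd : dc L = 0.
Hypothesis hLdeg : forall p a b, sdeg p a b != 1 -> lp L p a b = 0.

Let X1 := adw w 1 L.
Let X2 := adw w 1 X1.

Lemma mcomx0 (x : 'M[R]_8) : mcom x 0 = 0.
Proof. by rewrite /mcom mulmx0 mul0mx subrr. Qed.

Lemma L_degle2 : degle 2 (lp L).
Proof. by move=> p a b h; apply: hLdeg; apply/eqP; lia. Qed.

Lemma Lm1 : lp L (-1) = 0.
Proof.
apply/matrixP => a b; rewrite mxE; apply: hLdeg.
have := lam_bd a; have := lam_bd b; rewrite /sdeg; lia.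
Qed.

Lemma X1m1 : lp X1 (-1) = mcom (w (-2)) (lp L 1) + mcom (w (-1)) (lp L 0).
Proof.
rewrite /X1 /= hLd mul0r scale0r subr0 zsum_cons // zsum_cons // zsum_cons // zsum_nil // addr0 addrA.
have -> : mcom (w (-1 - 1 + 1 + 1)) (lp L (-1 - (-1 - 1 + 1 + 1))) = 0.
  by rewrite [lp L _]Lm1 mcomx0.
by rewrite addr0.
Qed.

Lemma adw_lp0 D (Y : elt R) p : dc Y = 0 ->
  lp (adw w D Y) p = zsum (p - D) 0 (fun m => mcom (w m) (lp Y (p - m))).
Proof. by move=> h; rewrite /= h mul0r scale0r subr0. Qed.

Lemma X1_0 : lp X1 0 = mcom (w (-1)) (lp L 1) + mcom (w 0) (lp L 0).
Proof.
by rewrite /X1 /= hLd mul0r scale0r subr0 zsum_cons // zsum_cons // zsum_nil // addr0.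
Qed.

Lemma X1_1 : lp X1 1 = mcom (w 0) (lp L 1).
Proof.
by rewrite /X1 /= hLd mul0r scale0r subr0 zsum_cons // zsum_nil // addr0.
Qed.

Lemma X2m1 : lp X2 (-1) = mcom (w (-2)) (lp X1 1) + mcom (w (-1)) (lp X1 0) + mcom (w 0) (lp X1 (-1)).
Proof.
rewrite /X2 adw_lp0 //.
by rewrite zsum_cons // zsum_cons // zsum_cons // zsum_nil // addr0 addrA.
Qed.

Lemma X2_0 : lp X2 0 = mcom (w (-1)) (lp X1 1) + mcom (w 0) (lp X1 0).
Proof.
rewrite /X2 adw_lp0 //.
by rewrite zsum_cons // zsum_cons // zsum_nil // addr0.
Qed.

Lemma X1_kc : kc X1 = - (halfR R * \tr (w (-1) *m lp L 1)).
Proof.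
rewrite /X1 /= zsum_cons // zsum_cons // zsum_nil // addr0 /nform.
by rewrite mul0r addr0 mulN1r.
Qed.

Lemma X1_deg : degle 1 (lp X1).
Proof. exact: (adw_deg 1 hw hLd L_degle2). Qed.

Lemma X2_deg : degle 0 (lp X2).
Proof. exact: (@adw_deg _ w 1 X1 1 hw (erefl _) X1_deg). Qed.

Lemma AdW_entry p a b : -1 <= p <= 1 -> -1 <= sdeg p a b ->
  lp (AdW w 1 L) p a b = lp L p a b + lp X1 p a b + halfR R * lp X2 p a b.
Proof.
move=> hp hs; rewrite /AdW expser_lpE (@sum_trunc _ (fun k => (k`!%:R)^-1 * lp (iter k (adw w 1) L) p a b) _ 3).
- rewrite !big_ord_recr big_ord0 /= add0r invr1 mul1r mul1r. done.
- lia.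
move=> k hk; rewrite (@iter_deg _ w 1 L 2 k hw hLd L_degle2) ?mulr0 //; lia.
Qed.

Lemma AdW_kc : kc (AdW w 1 L) = kc X1.
Proof.
rewrite /AdW /= (@sum_trunc _ (fun k => (k`!%:R)^-1 * kc (iter k (adw w 1) L)) _ 2) //.
  by rewrite !big_ord_recr big_ord0 /= add0r invr1 !mul1r hLk add0r.
case=> [|[|k]] // _; rewrite iterS adw_kc0 ?mulr0 //.
apply: (@degle_mono _ (2 - k.+1%:Z)); first lia.
exact: (@iter_deg _ w 1 L 2 k.+1 hw hLd L_degle2).
Qed.

Lemma AdW_dc : dc (AdW w 1 L) = 0.
Proof. by rewrite /AdW /= big1 // => k _; rewrite iter_dc ?mulr0. Qed.

Let U := eadd (posproj (AdW w 1 L)) (eopp L).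

Lemma lpU p a b : lp U p a b =
  (if 0 <= sdeg p a b then lp (AdW w 1 L) p a b else 0) - lp L p a b.
Proof. by rewrite /U /= !mxE. Qed.

Lemma U_entry p a b : -1 <= p <= 1 ->
  lp U p a b = if sdeg p a b == 0 then lp X1 p a b else 0.
Proof.
move=> hp; rewrite lpU.
have [hs|hs] := ltP (sdeg p a b) 0.
  rewrite hLdeg ?subr0; last by apply/eqP; lia.
  by case: eqP => // h; lia.
rewrite AdW_entry //; last lia.
rewrite X2_deg // mulr0 addr0 addrAC subrr add0r.
case: eqP => // h; rewrite X1_deg //; lia.
Qed.

Lemma U_kc : kc U = kc X1.
Proof. by rewrite /U; change (kc (AdW w 1 L) + - kc L = kc X1); rewrite AdW_kc hLk oppr0 addr0. Qed.

Lemma U_dc : dc U = 0.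
Proof. by rewrite /U; change (dc (AdW w 1 L) + - dc L = 0); rewrite AdW_dc hLd oppr0 addr0. Qed.

Lemma L2 : lp L 2 = 0.
Proof.
apply/matrixP => a b; rewrite mxE; apply: hLdeg.
have := lam_bd a; have := lam_bd b; rewrite /sdeg; lia.
Qed.

Lemma AdW_neg p a b : -1 <= p <= 1 -> sdeg p a b = -1 ->
  lp (AdW w 1 L) p a b = lp X1 p a b + halfR R * lp X2 p a b.
Proof.
move=> hp hs; rewrite AdW_entry ?hs // hLdeg ?add0r //; by rewrite hs.
Qed.

Lemma sato_rhs p a b : -1 <= p <= 1 -> sdeg p a b = -1 ->
  lp (eadd (posproj (AdW w 1 L)) (eopp (AdW w 1 L))) p a b
  = - (lp X1 p a b + halfR R * lp X2 p a b).
Proof.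
move=> hp hs.
have e : lp (eadd (posproj (AdW w 1 L)) (eopp (AdW w 1 L))) p a b =
  (if 0 <= sdeg p a b then lp (AdW w 1 L) p a b else 0) - lp (AdW w 1 L) p a b.
  by rewrite /= !mxE.
by rewrite e hs /= add0r AdW_neg.
Qed.
End Model.

Lemma dlogW_neg (R : comUnitRingType) (w dw : int -> 'M[R]_8) p a b :
  degle 0 w -> degle 0 dw -> sdeg p a b = -1 -> lp (dlogW w dw) p a b = dw p a b.
Proof.
move=> hw hdw hs; rewrite /dlogW expser_lpE.
rewrite (@sum_trunc _ (fun k => (k.+1`!%:R)^-1 * lp (iter k (adw w 0) (Elt dw 0 0)) p a b) _ 1).
- by rewrite big_ord_recr big_ord0 /= add0r invr1 mul1r.
- lia.
move=> k hk; rewrite (@iter_deg _ w 0 (Elt dw 0 0) 0 k hw (erefl _) hdw) ?mulr0 //; lia.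
Qed.
Section Der.
Variable C : fieldType.
Variable S : comUnitAlgType C.
Variable d : S -> S.
Hypothesis hd : is_derivation d.
Hypothesis h2 : (2%:R : C) != 0.

Lemma dD x y : d (x + y) = d x + d y. Proof. exact: hd.1. Qed.
Lemma d0 : d 0 = 0.
Proof. have h := dD 0 0; rewrite addr0 in h; apply: (@addrI _ (d 0)); by rewrite addr0 -h. Qed.
Lemma dN x : d (- x) = - d x.
Proof. have h := dD x (- x); rewrite subrr d0 in h; apply: (@addrI _ (d x)); by rewrite -h subrr. Qed.
Lemma dB x y : d (x - y) = d x - d y.
Proof. by rewrite dD dN. Qed.
Lemma dsum n (F : 'I_n -> S) : d (\sum_(k < n) F k) = \sum_(k < n) d (F k).
Proof. exact: (big_morph d dD d0). Qed.
Lemma dZ (c : C) x : d (c *: x) = c *: d x. Proof. exact: hd.2.1. Qed.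
Lemma dM x y : d (x * y) = d x * y + x * d y. Proof. exact: hd.2.2. Qed.
Lemma d1 : d 1 = 0.
Proof. have h := dM 1 1; rewrite !mulr1 mul1r in h; apply: (@addrI _ (d 1)); by rewrite addr0 -h. Qed.
Lemma dconst (c : C) : d (c%:A) = 0.
Proof. by rewrite dZ d1 scaler0. Qed.

Definition isconst (x : S) := exists c : C, x = c%:A.

Lemma dMr x y : isconst y -> d (x * y) = d x * y.
Proof. by case=> c ->; rewrite dM dconst mulr0 addr0. Qed.
Lemma dMl x y : isconst x -> d (x * y) = x * d y.
Proof. by case=> c ->; rewrite dM dconst mul0r add0r. Qed.

Lemma const_int (z : int) : isconst z%:~R.
Proof. by exists z%:~R; rewrite scaler_int. Qed.
Lemma const_nat (n : nat) : isconst n%:R.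
Proof. by exists n%:R; rewrite scaler_nat. Qed.
Lemma constM x y : isconst x -> isconst y -> isconst (x * y).
Proof. by case=> a -> [b ->]; exists (a * b); rewrite -scalerAl mul1r scalerA. Qed.

Lemma half_const : isconst (halfR S).
Proof.
exists (2%:R)^-1; rewrite /halfR.
have u : (2%:R : C) \is a GRing.unit by rewrite unitfE.
have := rmorphV (in_alg S) u; rewrite rmorph_nat /= => ->. done.
Qed.

Lemma dtr_r (M N : 'M[S]_8) : (forall a b, isconst (N a b)) ->
  d (\tr (M *m N)) = \tr (map_mx d M *m N).
Proof.
move=> h; rewrite !trE dsum; apply: eq_bigr => a _; rewrite dsum.
by apply: eq_bigr => c _; rewrite mxE dMr.
Qed.

Lemma dtr_l (M N : 'M[S]_8) : (forall a b, isconst (N a b)) ->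
  d (\tr (N *m M)) = \tr (N *m map_mx d M).
Proof.
move=> h; rewrite !trE dsum; apply: eq_bigr => a _; rewrite dsum.
by apply: eq_bigr => c _; rewrite mxE dMl.
Qed.

Lemma dg_const l a b : isconst (dg S l a b).
Proof. by rewrite dgE; apply: constM; [apply: const_nat | apply: const_int]. Qed.
End Der.

Unset Implicit Arguments.
Set Strict Implicit.

Lemma mcom0x (R : comUnitRingType) (x : 'M[R]_8) : mcom 0 x = 0.
Proof. by rewrite /mcom mulmx0 mul0mx subrr. Qed.

Lemma zsum_m11 (V : nmodType) (F : int -> V) : zsum (-1) 1 F = F (-1) + F 0 + F 1.
Proof. by rewrite zsum_cons // zsum_cons // zsum_cons // zsum_nil // addr0 addrA. Qed.

Lemma zsum_m10 (V : nmodType) (F : int -> V) : zsum (-1) 0 F = F (-1) + F 0.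
Proof. by rewrite zsum_cons // zsum_cons // zsum_nil // addr0. Qed.

Lemma zsum_00 (V : nmodType) (F : int -> V) : zsum 0 0 F = F 0.
Proof. by rewrite zsum_cons // zsum_nil // addr0. Qed.

Lemma tr_split (R : comUnitRingType) (P Q N : 'M[R]_8) k :
  \tr ((P + k *: Q) *m N) = \tr (P *m N) + k * \tr (Q *m N).
Proof. by rewrite mulmxDl trD -scalemxAl mxtraceZ. Qed.

Lemma trN (R : comUnitRingType) (x : 'M[R]_8) : \tr (- x) = - \tr x.
Proof. exact: raddfN. Qed.

Lemma fin_comb (R : comUnitRingType) (h t1 t2 v1 v2 a b c : R) :
  t1 + t2 = 0 -> v1 + v2 = - (c + b + a) ->
  - (h * (- (t1 + h * v1) - (t2 + h * v2))) + h * (h * (a + b + c)) = 0.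
Proof.
move=> e1 e2.
have -> : t2 = - t1 by rewrite -[t2](addKr t1) e1 addr0.
have -> : v2 = - v1 - (c + b + a) by rewrite -e2 addKr.
ring.
Qed.

Lemma map_mcom (C S : comUnitRingType) (f : {rmorphism C -> S}) (x y : 'M[C]_8) :
  mcom (map_mx f x) (map_mx f y) = map_mx f (mcom x y).
Proof. by rewrite /mcom map_mxB !map_mxM. Qed.

Theorem lemma2p1 (R0 : realType) (S : comUnitAlgType R0[i])
  (dt : nat -> 'I_2 -> S -> S)
  (Hder : forall n i, is_derivation (dt n i))
  (Hcomm : forall n i m j x, dt n i (dt m j x) = dt m j (dt n i x))
  (Lam : nat -> 'I_2 -> elt R0[i])
  (HL0 : Lam 0%N 0 = Lam11 R0[i] /\ Lam 0%N 1 = Lam12 R0[i])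
  (HLso : forall n i p, so8 (lp (Lam n i) p))
  (HLdeg : forall n i, (forall p a b, sdeg p a b != (2 * n + 1)%N%:Z ->
                                      lp (Lam n i) p a b = 0)
                       /\ kc (Lam n i) = 0 /\ dc (Lam n i) = 0)
  (HLs : forall n i, exists c, ebr 1 (Lam11 R0[i]) (Lam n i) = escale c (eK R0[i]))
  (HLcomm : forall n m i j, ebr (Posz n + 1) (Lam n i) (Lam m j) = ezero R0[i])
  (w : int -> 'M[S]_8)
  (Hw : in_gneg w) :
  let LamS n i := emap (in_alg S) (Lam n i) in
  let B n i := posproj (AdW w (Posz n + 1) (LamS n i)) in
  (forall n i,
     dlogW w (fun p => map_mx (dt n i) (w p)) =
     eadd (B n i) (eopp (AdW w (Posz n + 1) (LamS n i)))) ->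
  let U i := eadd (B 0%N i) (eopp (LamS 0%N i)) in
  forall i j : 'I_2,
    eform 0 (@d_s S) (emap (dt 0%N i) (U j)) + @halfR S * eform 1 (U i) (U j) = 0.
Proof.
move=> LamS B Hsato U i j.
have h2 : (2%:R : R0[i]) != 0 by rewrite pnatr_eq0.
set dd := dt 0%N i.
have hd : is_derivation dd := Hder 0%N i.
have hw0 : degle 0 w := Hw.2.
have hCd k : dc (Lam 0%N k) = 0 := (HLdeg 0%N k).2.2.
have hCdeg k p a b : sdeg p a b != 1 -> lp (Lam 0%N k) p a b = 0.
  by move=> h; apply: (HLdeg 0%N k).1.
have hLk k : kc (LamS 0%N k) = 0 by rewrite /LamS /= (HLdeg 0%N k).2.1 /= scale0r.
have hLd k : dc (LamS 0%N k) = 0 by rewrite /LamS /= (HLdeg 0%N k).2.2 /= scale0r.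
have hLdeg k p a b : sdeg p a b != 1 -> lp (LamS 0%N k) p a b = 0.
  by move=> h; rewrite /LamS /= mxE hCdeg // /= scale0r.
have hLc k p a b : isconst (lp (LamS 0%N k) p a b).
  by rewrite /LamS /= mxE; exists (lp (Lam 0%N k) p a b).
set Li := Lam 0%N i; set Lj := Lam 0%N j.
have hcomm p : zsum (-1) 1 (fun m => mcom (lp Li m) (lp Lj (p - m))) = 0.
  have := congr1 (fun X => lp X p) (HLcomm 0%N 0%N i j).
  by rewrite /= !hCd !mul0r !scale0r !subr0 addr0.
have c00 : mcom (lp Li 0) (lp Lj 0) = 0.
  have := hcomm 0; rewrite zsum_m11 (Lm1 (hCdeg i)) (Lm1 (hCdeg j)) mcom0x mcomx0.
  by rewrite add0r addr0.
have c01 : mcom (lp Li 0) (lp Lj 1) + mcom (lp Li 1) (lp Lj 0) = 0.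
  by have := hcomm 1; rewrite zsum_m11 (Lm1 (hCdeg i)) mcom0x add0r.
have c11 : mcom (lp Li 1) (lp Lj 1) = 0.
  by have := hcomm 2; rewrite zsum_m11 (Lm1 (hCdeg i)) (L2 (hCdeg j)) mcom0x mcomx0 !add0r.
have s00 : mcom (lp (LamS 0%N i) 0) (lp (LamS 0%N j) 0) = 0.
  by rewrite /LamS /= map_mcom c00 map_mx0.
have s01 : mcom (lp (LamS 0%N i) 0) (lp (LamS 0%N j) 1) + mcom (lp (LamS 0%N i) 1) (lp (LamS 0%N j) 0) = 0.
  by rewrite /LamS /= !map_mcom -map_mxD c01 map_mx0.
have s11 : mcom (lp (LamS 0%N i) 1) (lp (LamS 0%N j) 1) = 0.
  by rewrite /LamS /= map_mcom c11 map_mx0.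
have UE k p a b : -1 <= p <= 1 ->
    lp (U k) p a b = if sdeg p a b == 0 then lp (adw w 1 (LamS 0%N k)) p a b else 0.
  by move=> hp; apply: (U_entry hw0 (hLd k) (hLdeg k)).
have Ukc k : kc (U k) = kc (adw w 1 (LamS 0%N k)).
  exact: (U_kc hw0 (hLk k) (hLd k) (hLdeg k)).
have Udc k : dc (U k) = 0.
  exact: (U_dc w (hLd k)).
have hdw : degle 0 (fun p => map_mx dd (w p)).
  by move=> p a b hs; rewrite mxE hw0 // d0.
have sato n a c : -1 <= n <= 1 -> sdeg n a c = -1 ->
    dd (w n a c) = - (lp (adw w 1 (LamS 0%N i)) n a c
                     + halfR S * lp (adw w 1 (adw w 1 (LamS 0%N i))) n a c).
  move=> hn hs.
  have e := congr1 (fun X => lp X n a c) (Hsato 0%N i).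
  cbv beta in e; rewrite /B in e.
  rewrite (dlogW_neg hw0 hdw hs) mxE in e.
  by rewrite e (sato_rhs hw0 (hLd i) (hLdeg i) hn hs).
have E0 : eform 0 (d_s S) (emap dd (U j)) =
    dd (nform (dg S lam) (lp (U j) 0) + 4%:R * kc (U j)).
  rewrite /eform zsum_00 ds_loop0 ds_dc.
  have -> : dc (emap dd (U j)) = dd (dc (U j)) by [].
  have -> : kc (emap dd (U j)) = dd (kc (U j)) by [].
  have -> : lp (emap dd (U j)) (- 0) = map_mx dd (lp (U j) 0) by [].
  rewrite Udc (d0 hd) mulr0 addr0.
  rewrite [in RHS](dD hd) /nform [in RHS](dMl hd _ (@half_const _ S h2)) [in RHS](dMl hd _ (const_nat _ _)).
  rewrite (dtr_l hd); last by move=> a b; apply: dg_const.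
  by [].
have Bdeg n a c : lp (LamS 0%N j) (- n) c a != 0 -> sdeg n a c = -1.
  move=> h; have : sdeg (- n) c a == 1.
    by apply/negPn/negP => /(hLdeg j) /eqP; rewrite (negbTE h).
  by rewrite /sdeg => /eqP; lia.
have E1 : nform (dg S lam) (lp (U j) 0) + 4%:R * kc (U j) =
    - (halfR S * (\tr (w (-1) *m lp (LamS 0%N j) 1) + \tr (w 0 *m lp (LamS 0%N j) 0))).
  rewrite /nform (Ukc j) (X1_kc w (LamS 0%N j)).
  rewrite (@tr_filter_r _ _ _ (lp (adw w 1 (LamS 0%N j)) 0)); last first.
    move=> a c; rewrite dgE; have [<-|ne] := eqVneq a c; last by rewrite mul0r eqxx.
    move=> _; rewrite UE // (_ : sdeg 0 a a = 0) //; rewrite /sdeg; lia.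
  rewrite (X1_0 w (hLd j)) mulmxDr trD -!tr_com_l.
  have h1 : \tr ((mcom (dg S lam) (w (-1)) + (4 * -1)%:~R *: w (-1)) *m lp (LamS 0%N j) 1)
     = - \tr (w (-1) *m lp (LamS 0%N j) 1) := sdeg_tr (w (-1)) (fun a c h => Bdeg (-1) a c h).
  have h0 : \tr ((mcom (dg S lam) (w 0) + (4 * 0)%:~R *: w 0) *m lp (LamS 0%N j) 0)
     = - \tr (w 0 *m lp (LamS 0%N j) 0) := sdeg_tr (w 0) (fun a c h => Bdeg 0 a c h).
  rewrite !tr_split in h1 h0.
  move: h1 h0.
  set t1 := \tr (mcom _ (w (-1)) *m _). set t0 := \tr (mcom _ (w 0) *m _).
  set u1 := \tr (w (-1) *m _). set u0 := \tr (w 0 *m _).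
  move=> h1 h0.
  have -> : t1 = - u1 + 4%:R * u1 by rewrite -h1; ring.
  have -> : t0 = - u0 by rewrite -h0; ring.
  ring.
set X1i := adw w 1 (LamS 0%N i). set X1j := adw w 1 (LamS 0%N j).
set X2i := adw w 1 X1i.
have E2 : dd (- (halfR S * (\tr (w (-1) *m lp (LamS 0%N j) 1) + \tr (w 0 *m lp (LamS 0%N j) 0))))
   = - (halfR S * (\tr (map_mx dd (w (-1)) *m lp (LamS 0%N j) 1)
                   + \tr (map_mx dd (w 0) *m lp (LamS 0%N j) 0))).
  rewrite (dN hd) (dMl hd _ (@half_const _ S h2)) (dD hd) !(dtr_r hd) //.
have E3 n : -1 <= n <= 1 -> \tr (map_mx dd (w n) *m lp (LamS 0%N j) (- n)) =
    - (\tr (lp X1i n *m lp (LamS 0%N j) (- n)) + halfR S * \tr (lp X2i n *m lp (LamS 0%N j) (- n))).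
  move=> hn.
  rewrite (@tr_filter _ (map_mx dd (w n)) (- (lp X1i n + halfR S *: lp X2i n))); last first.
    move=> a c /Bdeg hs; rewrite [LHS]mxE (sato _ _ _ hn hs) /X2i /X1i.
    move: (lp (adw w 1 (LamS 0%N i)) n) (lp (adw w 1 (adw w 1 (LamS 0%N i))) n) => P Q.
    by rewrite !mxE.
  by rewrite mulNmx trN tr_split.
have E3m1 := E3 (-1) erefl. have E30 := E3 0 erefl.
have TUU m : -1 <= m <= 1 ->
    \tr (lp (U i) m *m lp (U j) (- m)) = \tr (lp X1i m *m lp X1j (- m)).
  move=> hm; apply: trUU.
  - by move=> a c; apply: UE.
  - by move=> a c; apply: UE; lia.
  - by move=> a c; apply: (X1_deg hw0 (hLd i) (hLdeg i)).
  - by move=> a c; apply: (X1_deg hw0 (hLd j) (hLdeg j)).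
have E4 : eform 1 (U i) (U j) = halfR S * (\tr (lp X1i (-1) *m lp X1j (- (-1)))
     + \tr (lp X1i 0 *m lp X1j (- 0)) + \tr (lp X1i 1 *m lp X1j (- 1))).
  rewrite /eform zsum_m11 !Udc mulr0 mul0r !addr0 /nform.
  rewrite !TUU //. ring.
have S1 : \tr (lp X1i (-1) *m lp (LamS 0%N j) (- (-1))) + \tr (lp X1i 0 *m lp (LamS 0%N j) (- 0)) = 0.
  rewrite /X1i (X1m1 w (hLd i) (hLdeg i)) (X1_0 w (hLd i)).
  exact: (core3 (w (-2)) (w (-1)) (w 0) s00 s01 s11).
have S2 : \tr (lp X2i (-1) *m lp (LamS 0%N j) (- (-1))) + \tr (lp X2i 0 *m lp (LamS 0%N j) (- 0))
   = - (\tr (lp X1i 1 *m lp X1j (- 1)) + \tr (lp X1i 0 *m lp X1j (- 0)) + \tr (lp X1i (-1) *m lp X1j (- (-1)))).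
  rewrite /X2i /X1i /X1j (X2m1 w (LamS 0%N i)) (X2_0 w (LamS 0%N i)).
  rewrite !(X1m1 w (hLd _) (hLdeg _)) !(X1_0 w (hLd _)) !(X1_1 w (hLd _)).
  exact: (core4 (w (-2)) (w (-1)) (w 0) (lp (LamS 0%N i) 0) (lp (LamS 0%N i) 1) (lp (LamS 0%N j) 0) (lp (LamS 0%N j) 1)).
rewrite E0 E1 E2 E3m1 E30 E4.
apply: fin_comb; [exact: S1 | exact: S2].
Qed.
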